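(* Every term $P$ over $\Sigma_m$ is provably equal, from $\mathrm{Md}$ in equational logic, to a Standard Meadow Form whose variables are among the variables of $P$.
   Context: The signature of meadows is $\Sigma_m=(0,1,+,\cdot,-,{}^{-1})$. $\mathrm{Md}$ is the set of equations: $(x+y)+z=x+(y+z)$, $x+y=y+x$, $x+0=x$, $x+(-x)=0$, $(x\cdot y)\cdot z=x\cdot(y\cdot z)$, $x\cdot y=y\cdot x$, $1\cdot x=x$, $x\cdot(y+z)=x\cdot y+x\cdot z$, $(x^{-1})^{-1}=x$, $x\cdot(x\cdot x^{-1})=x$. Notation: $t/u$ abbreviates $t\cdot u^{-1}$; $1_t$ abbreviates $t\cdot t^{-1}$ and $0_t$ abbreviates $1-1_t$. A polynomial is a $\Sigma_m$-term not containing ${}^{-1}$. SMFs of level $n$: an SMF of level $0$ is any term $s/t$ with $s,t$ polynomials; an SMF of level $n+1$ is any term $0_t\cdot P+1_t\cdot Q$ with $t$ a polynomial and $P,Q$ SMFs of level $n$. A Standard Meadow Form (SMF) is an SMF of some level. *)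

(* Defs.v *)
From Stdlib Require Import List.
Import ListNotations.

Inductive term : Type :=
| Var  : nat -> term
| Zero : term
| One  : term
| Add  : term -> term -> term
| Mul  : term -> term -> term
| Neg  : term -> term
| Inv  : term -> term.

Fixpoint vars (t : term) : list nat :=
  match t with
  | Var n => [n]
  | Zero | One => []
  | Add a b | Mul a b => vars a ++ vars b
  | Neg a | Inv a => vars a
  end.

Fixpoint subst (s : nat -> term) (t : term) : term :=
  match t with
  | Var n => s n
  | Zero => Zero
  | One => One
  | Add a b => Add (subst s a) (subst s b)
  | Mul a b => Mul (subst s a) (subst s b)
  | Neg a => Neg (subst s a)
  | Inv a => Inv (subst s a)
  end.

Definition vx := Var 0.
Definition vy := Var 1.
Definition vz := Var 2.

Inductive Md : term -> term -> Prop :=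
| Md_addA : Md (Add (Add vx vy) vz) (Add vx (Add vy vz))
| Md_addC : Md (Add vx vy) (Add vy vx)
| Md_add0 : Md (Add vx Zero) vx
| Md_addN : Md (Add vx (Neg vx)) Zero
| Md_mulA : Md (Mul (Mul vx vy) vz) (Mul vx (Mul vy vz))
| Md_mulC : Md (Mul vx vy) (Mul vy vx)
| Md_mul1 : Md (Mul One vx) vx
| Md_mulD : Md (Mul vx (Add vy vz)) (Add (Mul vx vy) (Mul vx vz))
| Md_invK : Md (Inv (Inv vx)) vx
| Md_rinv : Md (Mul vx (Mul vx (Inv vx))) vx.

Inductive Md_proves : term -> term -> Prop :=
| pr_ax    : forall t u, Md t u -> Md_proves t u
| pr_refl  : forall t, Md_proves t t
| pr_sym   : forall t u, Md_proves t u -> Md_proves u t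
| pr_trans : forall t u v, Md_proves t u -> Md_proves u v -> Md_proves t v
| pr_subst : forall (s : nat -> term) t u, Md_proves t u -> Md_proves (subst s t) (subst s u)
| pr_add   : forall t t' u u', Md_proves t t' -> Md_proves u u' -> Md_proves (Add t u) (Add t' u')
| pr_mul   : forall t t' u u', Md_proves t t' -> Md_proves u u' -> Md_proves (Mul t u) (Mul t' u')
| pr_neg   : forall t t', Md_proves t t' -> Md_proves (Neg t) (Neg t')
| pr_inv   : forall t t', Md_proves t t' -> Md_proves (Inv t) (Inv t').

Fixpoint polynomial (t : term) : Prop :=
  match t with
  | Var _ | Zero | One => True
  | Add a b | Mul a b => polynomial a /\ polynomial b
  | Neg a => polynomial a
  | Inv _ => False
  end.

Definition tdiv (t u : term) : term := Mul t (Inv u).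
Definition one_ (t : term) : term := Mul t (Inv t).
Definition zero_ (t : term) : term := Add One (Neg (one_ t)).

Inductive SMF_level : nat -> term -> Prop :=
| SMF0 : forall s t, polynomial s -> polynomial t -> SMF_level 0 (tdiv s t)
| SMFS : forall n t P Q, polynomial t -> SMF_level n P -> SMF_level n Q ->
         SMF_level (S n) (Add (Mul (zero_ t) P) (Mul (one_ t) Q)).

Definition SMF (t : term) : Prop := exists n, SMF_level n t.

(* Main.v *)
From Pilot Require Import Defs.
From Stdlib Require Import List.
From Stdlib Require Import Setoid Morphisms Ring Ring_theory Lia.
Import Pilot.Defs.

Definition eqm := Md_proves.

Definition s3 (a b c : term) : nat -> term :=
  fun n => match n with 0 => a | 1 => b | _ => c end.

Lemma addA a b c : eqm (Add (Add a b) c) (Add a (Add b c)).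
Proof. exact (pr_subst (s3 a b c) _ _ (pr_ax _ _ Md_addA)). Qed.
Lemma addC a b : eqm (Add a b) (Add b a).
Proof. exact (pr_subst (s3 a b a) _ _ (pr_ax _ _ Md_addC)). Qed.
Lemma add0 a : eqm (Add a Zero) a.
Proof. exact (pr_subst (s3 a a a) _ _ (pr_ax _ _ Md_add0)). Qed.
Lemma addN a : eqm (Add a (Neg a)) Zero.
Proof. exact (pr_subst (s3 a a a) _ _ (pr_ax _ _ Md_addN)). Qed.
Lemma mulA a b c : eqm (Mul (Mul a b) c) (Mul a (Mul b c)).
Proof. exact (pr_subst (s3 a b c) _ _ (pr_ax _ _ Md_mulA)). Qed.
Lemma mulC a b : eqm (Mul a b) (Mul b a).
Proof. exact (pr_subst (s3 a b a) _ _ (pr_ax _ _ Md_mulC)). Qed.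
Lemma mul1 a : eqm (Mul One a) a.
Proof. exact (pr_subst (s3 a a a) _ _ (pr_ax _ _ Md_mul1)). Qed.
Lemma mulD a b c : eqm (Mul a (Add b c)) (Add (Mul a b) (Mul a c)).
Proof. exact (pr_subst (s3 a b c) _ _ (pr_ax _ _ Md_mulD)). Qed.
Lemma invK a : eqm (Inv (Inv a)) a.
Proof. exact (pr_subst (s3 a a a) _ _ (pr_ax _ _ Md_invK)). Qed.
Lemma rinv a : eqm (Mul a (Mul a (Inv a))) a.
Proof. exact (pr_subst (s3 a a a) _ _ (pr_ax _ _ Md_rinv)). Qed.

#[global] Instance eqm_equiv : Equivalence eqm.
Proof. split. exact pr_refl. exact pr_sym. exact pr_trans. Qed.
#[global] Instance add_prop : Proper (eqm ==> eqm ==> eqm) Add.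
Proof. intros ? ? ? ? ? ?; apply pr_add; auto. Qed.
#[global] Instance mul_prop : Proper (eqm ==> eqm ==> eqm) Mul.
Proof. intros ? ? ? ? ? ?; apply pr_mul; auto. Qed.
#[global] Instance neg_prop : Proper (eqm ==> eqm) Neg.
Proof. intros ? ? ?; apply pr_neg; auto. Qed.
#[global] Instance inv_prop : Proper (eqm ==> eqm) Inv.
Proof. intros ? ? ?; apply pr_inv; auto. Qed.

Definition msub x y := Add x (Neg y).

Lemma mrth : ring_theory Zero One Add Mul msub Neg eqm.
Proof.
  constructor; intros.
  - rewrite addC; apply add0.
  - apply addC.
  - symmetry; apply addA.
  - apply mul1.
  - apply mulC.
  - symmetry; apply mulA.
  - rewrite mulC, mulD, (mulC z x), (mulC z y); reflexivity.
  - reflexivity.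
  - apply addN.
Qed.

Lemma mreqe : ring_eq_ext Add Mul Neg eqm.
Proof. constructor; typeclasses eauto. Qed.

Add Ring mring : mrth (setoid eqm_equiv mreqe).

Lemma L1 a : eqm (Mul (Inv a) (Mul (Inv a) a)) (Inv a).
Proof. rewrite <- (invK a) at 3. apply rinv. Qed.

Lemma uniq x y : eqm (Mul x (Mul x y)) x -> eqm (Mul y (Mul y x)) y -> eqm y (Inv x).
Proof.
  intros H1 H2.
  assert (EF : eqm (Mul x y) (Mul x (Inv x))).
  { transitivity (Mul (Mul x y) (Mul x (Inv x))).
    - transitivity (Mul (Mul x (Mul x (Inv x))) y). rewrite rinv; reflexivity. ring.
    - transitivity (Mul (Mul x (Mul x y)) (Inv x)). ring. rewrite H1; reflexivity. }
  rewrite <- H2.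
  transitivity (Mul y (Mul x y)). ring.
  rewrite EF.
  transitivity (Mul (Mul x y) (Inv x)). ring.
  rewrite EF. transitivity (Mul (Inv x) (Mul (Inv x) x)). ring. apply L1.
Qed.

Lemma invM x y : eqm (Inv (Mul x y)) (Mul (Inv x) (Inv y)).
Proof.
  symmetry; apply uniq.
  - transitivity (Mul (Mul x (Mul x (Inv x))) (Mul y (Mul y (Inv y)))). ring.
    rewrite !rinv; reflexivity.
  - transitivity (Mul (Mul (Inv x) (Mul (Inv x) x)) (Mul (Inv y) (Mul (Inv y) y))). ring.
    rewrite !L1; reflexivity.
Qed.

Lemma inv1 : eqm (Inv One) One.
Proof. symmetry; apply uniq; ring. Qed.

Definition br (f A B : term) : term := Add (Mul (Add One (Neg f)) A) (Mul f B).

#[global] Instance br_prop : Proper (eqm ==> eqm ==> eqm ==> eqm) br.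
Proof. intros ? ? H1 ? ? H2 ? ? H3; unfold br; rewrite H1, H2, H3; reflexivity. Qed.

Lemma br_mul f A B C D : eqm (Mul f f) f ->
  eqm (Mul (br f A B) (br f C D)) (br f (Mul A C) (Mul B D)).
Proof.
  intros Hf; unfold br.
  transitivity (Add (Add (Mul (Add One (Neg f)) (Mul A C)) (Mul f (Mul B D)))
     (Mul (Add (Mul f f) (Neg f)) (Add (Add (Mul A C) (Neg (Mul A D))) (Add (Neg (Mul B C)) (Mul B D))))).
  ring. rewrite Hf. ring.
Qed.

Lemma br_inv f A B : eqm (Mul f f) f ->
  eqm (Inv (br f A B)) (br f (Inv A) (Inv B)).
Proof.
  intros Hf; symmetry; apply uniq.
  - rewrite !br_mul by exact Hf. rewrite !rinv; reflexivity.
  - rewrite !br_mul by exact Hf. rewrite !L1; reflexivity.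
Qed.

Lemma one_idem t : eqm (Mul (one_ t) (one_ t)) (one_ t).
Proof.
  unfold one_. transitivity (Mul (Mul t (Mul t (Inv t))) (Inv t)). ring.
  rewrite rinv; reflexivity.
Qed.

Lemma leaf_mul s t u v : eqm (Mul (tdiv s t) (tdiv u v)) (tdiv (Mul s u) (Mul t v)).
Proof. unfold tdiv; rewrite invM; ring. Qed.

Lemma leaf_inv s t : eqm (Inv (tdiv s t)) (tdiv t s).
Proof. unfold tdiv; rewrite invM, invK; ring. Qed.

Lemma leaf_neg s t : eqm (Neg (tdiv s t)) (tdiv (Neg s) t).
Proof. unfold tdiv; ring. Qed.

Lemma pz t : eqm (Add (Mul t (Mul (Inv t) (Inv t))) (Neg (Inv t))) Zero.
Proof.
  transitivity (Add (Mul (Inv t) (Mul (Inv t) t)) (Neg (Inv t))). ring.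
  rewrite L1; ring.
Qed.

Lemma leaf_add s t u v :
  eqm (Add (tdiv s t) (tdiv u v))
      (br (one_ t) (br (one_ v) (tdiv u v) (tdiv u v))
                   (br (one_ v) (tdiv s t) (tdiv (Add (Mul s v) (Mul u t)) (Mul t v)))).
Proof.
  unfold br, one_, tdiv. rewrite invM.
  set (a := Inv t). set (b := Inv v).
  set (p := Add (Mul t (Mul a a)) (Neg a)).
  set (q := Add (Mul v (Mul b b)) (Neg b)).
  assert (Hp : eqm p Zero) by apply pz.
  assert (Hq : eqm q Zero) by apply pz.
  symmetry.
  transitivity (Add (Add (Mul u b) (Mul s a))
     (Add (Mul s p) (Add (Mul (Mul t (Mul a a)) (Mul v (Mul s q)))
        (Mul (Mul t u) (Add (Mul q (Mul t (Mul a a))) (Mul p b)))))).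
  unfold p, q; ring.
  rewrite Hp, Hq. ring.
Qed.

Lemma SMFS' n t P Q : polynomial t -> SMF_level n P -> SMF_level n Q ->
  SMF_level (S n) (br (one_ t) P Q).
Proof. exact (SMFS n t P Q). Qed.

Ltac vt := unfold incl, br, one_, zero_, tdiv in *; simpl in *;
  let v := fresh "v" in let Hv := fresh "Hv" in intros v Hv;
  repeat match goal with H : forall _, In _ _ -> In _ _ |- _ =>
    pose proof (H v); clear H end;
  repeat rewrite in_app_iff in *; tauto.

Lemma raise : forall k n P, SMF_level n P ->
  exists P', SMF_level (k + n) P' /\ eqm P P' /\ incl (vars P') (vars P).
Proof.
  induction k; intros n P HP.
  - exists P; split; [exact HP|split; [reflexivity| vt]].
  - destruct (IHk n P HP) as [P' [H1 [H2 H3]]].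
    exists (br (one_ One) P' P'); split; [apply SMFS'; simpl; auto|split].
    + rewrite H2; unfold br; ring.
    + vt.
Qed.

Lemma smf_br t R1 R2 : polynomial t -> SMF R1 -> SMF R2 ->
  exists R, SMF R /\ eqm (br (one_ t) R1 R2) R /\ incl (vars R) (vars (br (one_ t) R1 R2)).
Proof.
  intros Ht [n1 H1] [n2 H2].
  destruct (raise n2 n1 R1 H1) as [R1' [A1 [B1 C1]]].
  destruct (raise n1 n2 R2 H2) as [R2' [A2 [B2 C2]]].
  rewrite PeanoNat.Nat.add_comm in A2.
  exists (br (one_ t) R1' R2'); split; [exists (S (n2+n1)); apply SMFS'; auto|split].
  - rewrite B1, B2; reflexivity.
  - vt.
Qed.

Lemma binop_gen (op : term -> term -> term)
 (Hl : forall f A B C, eqm (op (br f A B) C) (br f (op A C) (op B C)))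
 (Hr : forall f A B C, eqm (op C (br f A B)) (br f (op C A) (op C B)))
 (Hleaf : forall s t u v, polynomial s -> polynomial t -> polynomial u -> polynomial v ->
    exists R, SMF R /\ eqm (op (tdiv s t) (tdiv u v)) R /\
      incl (vars R) (vars (tdiv s t) ++ vars (tdiv u v))) :
 forall n P, SMF_level n P -> forall m Q, SMF_level m Q ->
   exists R, SMF R /\ eqm (op P Q) R /\ incl (vars R) (vars P ++ vars Q).
Proof.
  induction 1 as [s t Hs Ht | n t P1 P2 Ht H1 IH1 H2 IH2].
  - induction 1 as [u v Hu Hv | m g Q1 Q2 Hg HQ1 IHQ1 HQ2 IHQ2].
    + apply Hleaf; auto.
    + destruct IHQ1 as [R1 [S1 [E1 I1]]], IHQ2 as [R2 [S2 [E2 I2]]].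
      destruct (smf_br g R1 R2 Hg S1 S2) as [R [SR [ER IR]]].
      exists R; split; [exact SR|split].
      * change (eqm (op (tdiv s t) (br (one_ g) Q1 Q2)) R).
        rewrite Hr, E1, E2; exact ER.
      * vt.
  - intros m Q HQ.
    destruct (IH1 m Q HQ) as [R1 [S1 [E1 I1]]], (IH2 m Q HQ) as [R2 [S2 [E2 I2]]].
    destruct (smf_br t R1 R2 Ht S1 S2) as [R [SR [ER IR]]].
    exists R; split; [exact SR|split].
    * change (eqm (op (br (one_ t) P1 P2) Q) R).
      rewrite Hl, E1, E2; exact ER.
    * vt.
Qed.

Lemma unop_gen (op : term -> term)
 (Hb : forall t A B, eqm (op (br (one_ t) A B)) (br (one_ t) (op A) (op B)))
 (Hleaf : forall s t, polynomial s -> polynomial t ->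
    exists R, SMF R /\ eqm (op (tdiv s t)) R /\ incl (vars R) (vars (tdiv s t))) :
 forall n P, SMF_level n P -> exists R, SMF R /\ eqm (op P) R /\ incl (vars R) (vars P).
Proof.
  induction 1 as [s t Hs Ht | n t P1 P2 Ht H1 IH1 H2 IH2].
  - apply Hleaf; auto.
  - destruct IH1 as [R1 [S1 [E1 I1]]], IH2 as [R2 [S2 [E2 I2]]].
    destruct (smf_br t R1 R2 Ht S1 S2) as [R [SR [ER IR]]].
    exists R; split; [exact SR|split].
    * change (eqm (op (br (one_ t) P1 P2)) R).
      rewrite Hb, E1, E2; exact ER.
    * vt.
Qed.

Lemma add_smf n P m Q : SMF_level n P -> SMF_level m Q ->
  exists R, SMF R /\ eqm (Add P Q) R /\ incl (vars R) (vars P ++ vars Q).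
Proof.
  intros HP HQ; apply (binop_gen Add) with (n:=n) (m:=m); auto.
  - intros; unfold br; ring.
  - intros; unfold br; ring.
  - intros s t u v Hs Ht Hu Hv.
    eexists; split; [|split; [apply leaf_add|vt]].
    exists 2. apply SMFS'; auto; apply SMFS'; auto; constructor; simpl; auto.
Qed.

Lemma mul_smf n P m Q : SMF_level n P -> SMF_level m Q ->
  exists R, SMF R /\ eqm (Mul P Q) R /\ incl (vars R) (vars P ++ vars Q).
Proof.
  intros HP HQ; apply (binop_gen Mul) with (n:=n) (m:=m); auto.
  - intros; unfold br; ring.
  - intros; unfold br; ring.
  - intros s t u v Hs Ht Hu Hv.
    eexists; split; [|split; [apply leaf_mul|vt]].
    exists 0. constructor; simpl; auto.
Qed.

Lemma neg_smf n P : SMF_level n P ->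
  exists R, SMF R /\ eqm (Neg P) R /\ incl (vars R) (vars P).
Proof.
  apply (unop_gen Neg).
  - intros; unfold br; ring.
  - intros s t Hs Ht.
    eexists; split; [|split; [apply leaf_neg|vt]].
    exists 0. constructor; simpl; auto.
Qed.

Lemma inv_smf n P : SMF_level n P ->
  exists R, SMF R /\ eqm (Inv P) R /\ incl (vars R) (vars P).
Proof.
  apply (unop_gen Inv).
  - intros; apply br_inv, one_idem.
  - intros s t Hs Ht.
    eexists; split; [|split; [apply leaf_inv|vt]].
    exists 0. constructor; simpl; auto.
Qed.

Lemma const_smf c : polynomial c -> eqm c (tdiv c One).
Proof. intros _; unfold tdiv; rewrite inv1; ring. Qed.

Theorem theorem1 :
  forall P : term,
    exists Q : term,
      SMF Q /\ Md_proves P Q /\ (forall v : nat, In v (vars Q) -> In v (vars P)).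
Proof.
  induction P as [n | | | a IHa b IHb | a IHa b IHb | a IHa | a IHa].
  - exists (tdiv (Var n) One); split; [exists 0; constructor; simpl; auto|split].
    apply const_smf; simpl; auto. simpl; intros; tauto.
  - exists (tdiv Zero One); split; [exists 0; constructor; simpl; auto|split].
    apply const_smf; simpl; auto. simpl; intros; tauto.
  - exists (tdiv One One); split; [exists 0; constructor; simpl; auto|split].
    apply const_smf; simpl; auto. simpl; intros; tauto.
  - destruct IHa as [Qa [[na Ha] [Ea Ia]]], IHb as [Qb [[nb Hb] [Eb Ib]]].
    destruct (add_smf na Qa nb Qb Ha Hb) as [R [SR [ER IR]]].
    exists R; split; [exact SR|split].
    + change (eqm (Add a b) R); rewrite Ea, Eb; exact ER.
    + change (incl (vars R) (vars a ++ vars b)); vt.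
  - destruct IHa as [Qa [[na Ha] [Ea Ia]]], IHb as [Qb [[nb Hb] [Eb Ib]]].
    destruct (mul_smf na Qa nb Qb Ha Hb) as [R [SR [ER IR]]].
    exists R; split; [exact SR|split].
    + change (eqm (Mul a b) R); rewrite Ea, Eb; exact ER.
    + change (incl (vars R) (vars a ++ vars b)); vt.
  - destruct IHa as [Qa [[na Ha] [Ea Ia]]].
    destruct (neg_smf na Qa Ha) as [R [SR [ER IR]]].
    exists R; split; [exact SR|split].
    + change (eqm (Neg a) R); rewrite Ea; exact ER.
    + change (incl (vars R) (vars a)); vt.
  - destruct IHa as [Qa [[na Ha] [Ea Ia]]].
    destruct (inv_smf na Qa Ha) as [R [SR [ER IR]]].
    exists R; split; [exact SR|split].
    + change (eqm (Inv a) R); rewrite Ea; exact ER.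
    + change (incl (vars R) (vars a)); vt.
Qed.
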